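(* Let $A\in\mathbb R^{m\times N}$, let $\mathcal B=(\mathcal B_1,\dots,\mathcal B_B)$ be a block structure with weights $\omega=(\omega_1,\dots,\omega_B)$, $\omega_i\ge1$. Let $s\ge2\|\omega\|_\infty^2$ and suppose $A$ satisfies the WBRIP of order $2s$ with constant $\delta_{2s}<\frac{1}{2\sqrt2+1}$. Then $A$ satisfies the $\ell^2_\omega$-BRNSP of order $s$ with constants $\rho=\frac{2\sqrt2\,\delta_{2s}}{1-\delta_{2s}}$ and $\tau=\frac{\sqrt{1+\delta_{2s}}}{1-\delta_{2s}}$.
   Context: Block structure: $\mathcal B=(\mathcal B_1,\dots,\mathcal B_B)$ partition of $\{1,\dots,N\}$; $x[b]=x[\mathcal B_b]$; for $S\subseteq\{1,\dots,B\}$, $x[S]$ equals $x$ on blocks in $S$ and $0$ elsewhere, $S^c$ its complement. Weights $\omega_b\ge1$, $\|\omega\|_\infty=\max_b\omega_b$, $\omega(S)=\sum_{b\in S}\omega_b^2$. $\|x\|_{2,p}^{(\omega)}=\big(\sum_b\omega_b^{2-p}\|x[b]\|_2^p\big)^{1/p}$. $\|x\|_0^{(\omega)}=\omega(\{b:x[b]\ne0\})$. Definition ($\ell^p_\omega$-BRNSP): $A$ satisfies the weighted block $\ell^p$ robust null space property of order $s$ with constants $\rho\in(0,1)$, $\tau>0$ if $\|x[S]\|_{2,p}^{(\omega)}\le\frac{\rho}{s^{1-1/p}}\|x[S^c]\|_{2,1}^{(\omega)}+\tau\|Ax\|_2$ for all $x\in\mathbb R^N$ and all $S$ with $\omega(S)\le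 s$. Definition (WBRIP): $A$ satisfies the weighted block restricted isometry property of order $t\ge\|\omega\|_\infty$ with constant $\delta\in(0,1)$ if $(1-\delta)\|x\|_2^2\le\|Ax\|_2^2\le(1+\delta)\|x\|_2^2$ for all $x$ with $\|x\|_0^{(\omega)}\le t$; the smallest such $\delta$ is denoted $\delta_t$. *)

(* Defs.v *)
(* the statement is purely algebraic/order-theoretic over the
   reals (sums, products, square roots), so we state it for an arbitrary
   real closed field R (which includes the reals). *)
From HB Require Import structures.
From mathcomp Require Import all_boot all_order all_algebra.
Set Implicit Arguments. Unset Strict Implicit. Unset Printing Implicit Defensive.
Import Order.TTheory GRing.Theory Num.Theory.
Local Open Scope ring_scope.

Section BlockDefs.
Variables (R : rcfType) (N B : nat).
(* Block structure: blk i = index of the block containing coordinate i. *)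
Variable blk : 'I_N -> 'I_B.
Variable w : 'I_B -> R.

Definition l2norm (n : nat) (x : 'cV[R]_n) : R := Num.sqrt (\sum_i x i 0 ^+ 2).

Definition bnorm (x : 'cV[R]_N) (b : 'I_B) : R :=
  Num.sqrt (\sum_(i | blk i == b) x i 0 ^+ 2).

Definition restrict (S : {set 'I_B}) (x : 'cV[R]_N) : 'cV[R]_N :=
  \col_i (if blk i \in S then x i 0 else 0).

Definition block_nz (x : 'cV[R]_N) (b : 'I_B) : bool :=
  [exists i, (blk i == b) && (x i 0 != 0)].

Definition womega (S : {set 'I_B}) : R := \sum_(b in S) w b ^+ 2.

Definition wnorm0 (x : 'cV[R]_N) : R := womega [set b | block_nz x b].

Definition winf : R := \big[Num.max/0]_b w b.

Definition wnorm21 (x : 'cV[R]_N) : R := \sum_b w b * bnorm x b.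

(* ||x||_{2,2}^(omega) = (sum_b omega_b^{2-2} ||x[b]||_2^2)^{1/2} *)
Definition wnorm22 (x : 'cV[R]_N) : R :=
  Num.sqrt (\sum_b w b ^+ 0 * bnorm x b ^+ 2).

Definition WBRIP (m : nat) (A : 'M[R]_(m, N)) (t delta : R) : Prop :=
  [/\ 0 < delta < 1, winf <= t &
   forall x : 'cV[R]_N, wnorm0 x <= t ->
     (1 - delta) * l2norm x ^+ 2 <= l2norm (A *m x) ^+ 2
     /\ l2norm (A *m x) ^+ 2 <= (1 + delta) * l2norm x ^+ 2].

(* Weighted block l^2 robust null space property of order s with constants
   rho, tau; note s^{1-1/2} = sqrt s. *)
Definition BRNSP2 (m : nat) (A : 'M[R]_(m, N)) (s rho tau : R) : Prop :=
  [/\ 0 < rho < 1, 0 < tau &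
   forall (x : 'cV[R]_N) (S : {set 'I_B}), womega S <= s ->
     wnorm22 (restrict S x)
       <= rho / Num.sqrt s * wnorm21 (restrict (~: S) x) + tau * l2norm (A *m x)].
End BlockDefs.

(* Main.v *)
Require Import Defs.
From HB Require Import structures.
From mathcomp Require Import all_boot all_order all_algebra.
From mathcomp Require Import ring lra zify.
Import Order.TTheory GRing.Theory Num.Theory.
Local Open Scope ring_scope.

Section Vec.
Context {R : rcfType}.
Definition dot {n} (u v : 'cV[R]_n) : R := \sum_i u i 0 * v i 0.

Lemma l2normE {n} (u : 'cV[R]_n) : l2norm u = Num.sqrt (dot u u).
Proof. by rewrite /l2norm /dot; congr Num.sqrt; apply: eq_bigr => i _; rewrite expr2. Qed.

Lemma dot_ge0 {n} (u : 'cV[R]_n) : 0 <= dot u u.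
Proof. by apply: sumr_ge0 => i _; rewrite -expr2 sqr_ge0. Qed.

Lemma sqr_l2norm {n} (u : 'cV[R]_n) : l2norm u ^+ 2 = dot u u.
Proof. by rewrite l2normE sqr_sqrtr // dot_ge0. Qed.

Lemma l2norm_ge0 {n} (u : 'cV[R]_n) : 0 <= l2norm u.
Proof. exact: sqrtr_ge0. Qed.

Lemma dotC {n} (u v : 'cV[R]_n) : dot u v = dot v u.
Proof. by apply: eq_bigr => i _; rewrite mulrC. Qed.

Lemma dotDr {n} (u v w : 'cV[R]_n) : dot u (v + w) = dot u v + dot u w.
Proof. by rewrite /dot -big_split; apply: eq_bigr => i _; rewrite !mxE mulrDr. Qed.

Lemma dotDl {n} (u v w : 'cV[R]_n) : dot (v + w) u = dot v u + dot w u.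
Proof. by rewrite dotC dotDr !(dotC u). Qed.

Lemma dotZr {n} a (u v : 'cV[R]_n) : dot u (a *: v) = a * dot u v.
Proof. by rewrite /dot mulr_sumr; apply: eq_bigr => i _; rewrite !mxE mulrCA. Qed.

Lemma dotZl {n} a (u v : 'cV[R]_n) : dot (a *: v) u = a * dot v u.
Proof. by rewrite dotC dotZr dotC. Qed.

Lemma dot0r {n} (u : 'cV[R]_n) : dot u 0 = 0.
Proof. by rewrite /dot big1 // => i _; rewrite mxE mulr0. Qed.

Lemma dot0l {n} (u : 'cV[R]_n) : dot 0 u = 0.
Proof. by rewrite dotC dot0r. Qed.

Lemma dot_sumr {n} (I : Type) (r : seq I) (F : I -> 'cV[R]_n) u :
  dot u (\sum_(i <- r) F i) = \sum_(i <- r) dot u (F i).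
Proof.
elim: r => [|a r IH]; first by rewrite !big_nil dot0r.
by rewrite !big_cons dotDr IH.
Qed.

Lemma dot_eq0 {n} (u : 'cV[R]_n) : dot u u = 0 -> u = 0.
Proof.
move=> H; apply/matrixP => i j; rewrite ord1 mxE.
have nn : forall k : 'I_n, true -> 0 <= u k 0 * u k 0.
  by move=> k _; rewrite -expr2 sqr_ge0.
have := @psumr_eq0P _ _ _ _ nn H i isT.
by rewrite -expr2 => /eqP; rewrite sqrf_eq0 => /eqP.
Qed.

Lemma l2norm_eq0 {n} (u : 'cV[R]_n) : l2norm u = 0 -> u = 0.
Proof. by move=> H; apply: dot_eq0; rewrite -sqr_l2norm H expr0n. Qed.

Lemma dot_comb {n} a b (u v : 'cV[R]_n) :
  dot (a *: u + b *: v) (a *: u + b *: v) =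
  a ^+ 2 * dot u u + 2 * a * b * dot u v + b ^+ 2 * dot v v.
Proof.
rewrite !dotDl !dotDr !dotZl !dotZr (dotC v u); ring.
Qed.

Lemma cs {n} (u v : 'cV[R]_n) : dot u v <= l2norm u * l2norm v.
Proof.
have [a0|a0] := eqVneq (l2norm u) 0.
  by rewrite (l2norm_eq0 _ a0) dot0l mulr_ge0 ?l2norm_ge0.
have [b0|b0] := eqVneq (l2norm v) 0.
  by rewrite (l2norm_eq0 _ b0) dot0r mulr_ge0 ?l2norm_ge0.
have ap : 0 < l2norm u by rewrite lt_def a0 l2norm_ge0.
have bp : 0 < l2norm v by rewrite lt_def b0 l2norm_ge0.
have := dot_ge0 (l2norm v *: u + (- l2norm u) *: v).
rewrite dot_comb -!sqr_l2norm.
set a := l2norm u; set b := l2norm v; set D := dot u v => H.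
have abp : 0 < a * b by rewrite mulr_gt0.
nra.
Qed.
End Vec.

Section Block.
Variables (R : rcfType) (m N B : nat) (A : 'M[R]_(m, N)) (blk : 'I_N -> 'I_B)
  (w : 'I_B -> R) (s delta : R).
Hypothesis w1 : forall b, 1 <= w b.
Hypothesis d0 : 0 <= delta.
Implicit Types (x y z : 'cV[R]_N) (T U V P : {set 'I_B}).
Hypothesis RIP : forall x : 'cV[R]_N, wnorm0 blk w x <= 2 * s ->
     (1 - delta) * l2norm x ^+ 2 <= l2norm (A *m x) ^+ 2
     /\ l2norm (A *m x) ^+ 2 <= (1 + delta) * l2norm x ^+ 2.

Lemma wpos b : 0 < w b.
Proof. exact: lt_le_trans ltr01 (w1 b). Qed.

Definition supp (y : 'cV[R]_N) (T : {set 'I_B}) :=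
  forall i, blk i \notin T -> y i 0 = 0.

Lemma womega_le (X T : {set 'I_B}) : X \subset T -> womega w X <= womega w T.
Proof.
move=> sXT; rewrite /womega [X in X <= _]big_mkcond [X in _ <= X]big_mkcond /=.
apply: ler_sum => b _; case: ifP => bX; first by rewrite (subsetP sXT _ bX).
by case: ifP => _; rewrite ?sqr_ge0.
Qed.

Lemma womega_ge0 (X : {set 'I_B}) : 0 <= womega w X.
Proof. by apply: sumr_ge0 => b _; rewrite sqr_ge0. Qed.

Lemma womegaU (T1 T2 : {set 'I_B}) :
  womega w (T1 :|: T2) <= womega w T1 + womega w T2.
Proof.
rewrite /womega [X in X <= _]big_mkcond [X in _ <= X + _]big_mkcond.
rewrite [X in _ <= _ + X]big_mkcond -big_split /=.
apply: ler_sum => b _; rewrite in_setU.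
case: (b \in T1); case: (b \in T2) => /=; rewrite ?addr0 ?add0r ?lerDl ?sqr_ge0 //.
Qed.

Lemma wnorm0_supp {y T} : supp y T -> wnorm0 blk w y <= womega w T.
Proof.
move=> sy; apply: womega_le; apply/subsetP => b.
rewrite inE => /existsP [i /andP [/eqP <- nz]].
by apply/negPn/negP => Hn; move: nz; rewrite sy ?eqxx.
Qed.

Lemma supp_restrict T x : supp (restrict blk T x) T.
Proof. by move=> i /negbTE Hi; rewrite mxE Hi. Qed.

Lemma supp_comb a b {y z T1 T2} : supp y T1 -> supp z T2 ->
  supp (a *: y + b *: z) (T1 :|: T2).
Proof.
move=> sy sz i; rewrite in_setU negb_or => /andP [h1 h2].
by rewrite !mxE sy // sz // !mulr0 addr0.
Qed.

Lemma supp_add {y z T1 T2} : supp y T1 -> supp z T2 -> supp (y + z) (T1 :|: T2).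
Proof.
move=> sy sz i; rewrite in_setU negb_or => /andP [h1 h2].
by rewrite !mxE sy // sz // addr0.
Qed.

Lemma dot_disj {y z T1 T2} : supp y T1 -> supp z T2 -> [disjoint T1 & T2] -> dot y z = 0.
Proof.
move=> sy sz dis; rewrite /dot big1 // => i _.
case: (boolP (blk i \in T1)) => h.
  by rewrite sz ?mulr0 // (disjointFr dis h).
by rewrite sy ?mul0r.
Qed.

Lemma mulmx_comb a b (y z : 'cV[R]_N) :
  A *m (a *: y + b *: z) = a *: (A *m y) + b *: (A *m z).
Proof. by rewrite mulmxDr !scalemxAr. Qed.

Lemma polar y z T1 T2 : supp y T1 -> supp z T2 -> [disjoint T1 & T2] ->
  womega w T1 + womega w T2 <= 2 * s ->
  `|dot (A *m y) (A *m z)| <= delta * (l2norm y * l2norm z).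
Proof.
move=> sy sz dis hw.
have dyz := dot_disj sy sz dis.
have [a0|a0] := eqVneq (l2norm y) 0.
  by rewrite (l2norm_eq0 _ a0) mulmx0 dot0l normr0 !mulr_ge0 ?l2norm_ge0.
have [b0|b0] := eqVneq (l2norm z) 0.
  by rewrite (l2norm_eq0 _ b0) mulmx0 dot0r normr0 !mulr_ge0 ?l2norm_ge0.
have ap : 0 < l2norm y by rewrite lt_def a0 l2norm_ge0.
have bp : 0 < l2norm z by rewrite lt_def b0 l2norm_ge0.
have Ya := sqr_l2norm y; have Zb := sqr_l2norm z.
set a := l2norm y in ap Ya *; set b := l2norm z in bp Zb *.
set D := dot (A *m y) (A *m z).
have step : forall c, c ^+ 2 = a ^+ 2 -> b * c * D <= delta * (a ^+ 2 * b ^+ 2).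
  move=> c hc.
  have hw1 : wnorm0 blk w (b *: y + c *: z) <= 2 * s.
    by apply: le_trans (wnorm0_supp (supp_comb b c sy sz)) _; apply: le_trans (womegaU _ _) hw.
  have hw2 : wnorm0 blk w (b *: y + (- c) *: z) <= 2 * s.
    by apply: le_trans (wnorm0_supp (supp_comb b (- c) sy sz)) _; apply: le_trans (womegaU _ _) hw.
  have [_ r1] := RIP _ hw1; have [r2 _] := RIP _ hw2.
  rewrite !sqr_l2norm !mulmx_comb !dot_comb dyz -Ya -Zb in r1 r2.
  have hc2 : (- c) ^+ 2 = a ^+ 2 by rewrite sqrrN.
  rewrite hc2 hc -/D in r1 r2.
  move: r1 r2; set Y := dot (A *m y) (A *m y); set Z := dot (A *m z) (A *m z).
  move=> r1 r2; nra.
have s1 := step a erefl.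
have s2 := step (- a) (sqrrN a).
have abp : 0 < a * b by rewrite mulr_gt0.
rewrite ler_norml; apply/andP; split; nra.
Qed.

Lemma bnorm_ge0 x b : 0 <= bnorm blk x b.
Proof. exact: sqrtr_ge0. Qed.

Lemma sqr_bnorm x b : bnorm blk x b ^+ 2 = \sum_(i | blk i == b) x i 0 ^+ 2.
Proof. by rewrite sqr_sqrtr // sumr_ge0 // => i _; rewrite sqr_ge0. Qed.

Lemma bnorm_restrict T x b :
  bnorm blk (restrict blk T x) b = if b \in T then bnorm blk x b else 0.
Proof.
rewrite /bnorm; under eq_bigr => i /eqP hi do rewrite mxE hi.
case: ifP => _ //; rewrite big1 ?sqrtr0 // => i _.
by rewrite expr2 mul0r.
Qed.

Lemma dot_restrict T x :
  dot (restrict blk T x) (restrict blk T x) = \sum_(b in T) bnorm blk x b ^+ 2.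
Proof.
rewrite /dot (partition_big blk predT) //= [RHS]big_mkcond /=.
apply: eq_bigr => b _; rewrite sqr_bnorm; case: ifP => bT.
  by apply: eq_bigr => i /= /eqP hi; rewrite mxE hi bT expr2.
by apply: big1 => i /= /eqP hi; rewrite mxE hi bT mul0r.
Qed.

Lemma l2norm_restrict2 T x :
  l2norm (restrict blk T x) ^+ 2 = \sum_(b in T) bnorm blk x b ^+ 2.
Proof. by rewrite sqr_l2norm dot_restrict. Qed.

Lemma wnorm22_restrict S x :
  wnorm22 blk w (restrict blk S x) = l2norm (restrict blk S x).
Proof.
rewrite /wnorm22 l2normE dot_restrict [in RHS]big_mkcond /=; congr Num.sqrt.
apply: eq_bigr => b _; rewrite bnorm_restrict expr0 mul1r.
by case: ifP => // _; rewrite expr2 mul0r.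
Qed.

Definition W x (V : {set 'I_B}) := \sum_(b in V) w b * bnorm blk x b.

Lemma W_ge0 x V : 0 <= W x V.
Proof. by apply: sumr_ge0 => b _; rewrite mulr_ge0 ?bnorm_ge0 // ltW ?wpos. Qed.

Lemma wnorm21_restrict T x : wnorm21 blk w (restrict blk T x) = W x T.
Proof.
rewrite /wnorm21 /W [RHS]big_mkcond /=; apply: eq_bigr => b _.
by rewrite bnorm_restrict; case: ifP => // _; rewrite mulr0.
Qed.

Lemma W_split x T U : T \subset U -> W x U = W x T + W x (U :\: T).
Proof.
move=> sTU; rewrite /W [LHS]big_mkcond [X in X + _]big_mkcond.
rewrite [X in _ + X]big_mkcond -big_split /=; apply: eq_bigr => b _.
rewrite in_setD; case: (boolP (b \in T)) => h /=.
  by rewrite (subsetP sTU _ h) addr0.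
by rewrite add0r.
Qed.

Lemma restrict_split T U x : T \subset U ->
  restrict blk U x = restrict blk T x + restrict blk (U :\: T) x.
Proof.
move=> sTU; apply/matrixP => i j; rewrite ord1 !mxE in_setD.
case: (boolP (blk i \in T)) => h /=.
  by rewrite (subsetP sTU _ h) addr0.
by rewrite add0r.
Qed.

Lemma restrict_compl T x : x = restrict blk T x + restrict blk (~: T) x.
Proof.
apply/matrixP => i j; rewrite ord1 !mxE in_setC.
by case: (blk i \in T) => /=; rewrite ?addr0 ?add0r.
Qed.

Lemma restrict_set0 x : restrict blk set0 x = 0.
Proof. by apply/matrixP => i j; rewrite !mxE in_set0. Qed.


Hypothesis spos : 0 < s.
Hypothesis wsq : forall c, w c ^+ 2 <= s / 2.

Section Fixx.
Variable x : 'cV[R]_N.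
Definition r b := bnorm blk x b / w b.

Lemma top_group U : exists T, [/\ T \subset U, womega w T <= s,
  (T != U -> s / 2 <= womega w T) &
  forall b c, b \in T -> c \in U :\: T -> r c <= r b].
Proof.
suff H : forall n T, #|U :\: T| = n -> T \subset U -> womega w T <= s ->
    (forall b c, b \in T -> c \in U :\: T -> r c <= r b) ->
    exists T, [/\ T \subset U, womega w T <= s,
     (T != U -> s / 2 <= womega w T) &
     forall b c, b \in T -> c \in U :\: T -> r c <= r b].
  apply: (H _ set0 erefl (sub0set U)); first by rewrite /womega big_set0 ltW.
  by move=> b c; rewrite in_set0.
elim=> [|n IH] T hn sTU hw hd.
  have eTU : T = U.
    by apply/eqP; rewrite eqEsubset sTU /= -setD_eq0 -cards_eq0 hn.
  by exists T; split => //; rewrite eTU eqxx.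
have [c0 hc0] : exists c0, c0 \in U :\: T.
  by apply/set0Pn; rewrite -cards_eq0 hn.
case: (@arg_maxP _ _ _ c0 (mem (U :\: T)) r hc0) => c hc0' hmax.
have hc : c \in U :\: T := hc0'.
have cnT : c \notin T by move: hc; rewrite !inE => /andP [].
have cU : c \in U by move: hc; rewrite !inE => /andP [].
case: (lerP (womega w T + w c ^+ 2) s) => hle.
  apply: (IH (c |: T)).
  - have e : U :\: (c |: T) = (U :\: T) :\ c.
      by apply/setP => d; rewrite !inE; case: (d == c); case: (d \in T).
    move: (cardsD1 c (U :\: T)); rewrite hn hc e add1n => [[]] //.
  - by rewrite subUset sub1set cU sTU.
  - by rewrite /womega big_setU1 //= addrC.
  - move=> b d; rewrite in_setU1 => /orP [/eqP -> | bT] hdin.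
      have hd' : d \in U :\: T.
        by move: hdin; rewrite !inE; case: (d == c) => //=; case: (d \in T).
      exact: (hmax d hd').
    apply: hd => //; move: hdin; rewrite !inE.
    by case: (d == c) => //=.
exists T; split => // _.
have := wsq c; lra.
Qed.

Lemma step_bound T P U : T \subset U -> womega w T <= s ->
  (forall b c, b \in P -> c \in U -> r c <= r b) -> s / 2 <= womega w P ->
  l2norm (restrict blk T x) <= 2 / Num.sqrt s * W x P.
Proof.
move=> sTU hwT hd hP.
have key : forall c, c \in T -> bnorm blk x c * womega w P <= w c * W x P.
  move=> c cT; rewrite /womega /W !mulr_sumr; apply: ler_sum => b bP.
  have := hd b c bP (subsetP sTU c cT); rewrite /r.
  have wc0 := wpos c; have wb0 := wpos b.
  rewrite ler_pdivrMr // mulrAC ler_pdivlMr // => H.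
  have := bnorm_ge0 x b; have := bnorm_ge0 x c; nra.
have hQ : l2norm (restrict blk T x) ^+ 2 * womega w P ^+ 2 <= womega w T * W x P ^+ 2.
  rewrite l2norm_restrict2 /womega !mulr_suml; apply: ler_sum => c cT.
  have := key c cT; have := bnorm_ge0 x c; have := womega_ge0 P.
  rewrite /womega.
  set p := bnorm blk x c; set q := \sum_(i in P) w i ^+ 2; set t := W x P.
  have := wpos c; have := W_ge0 x P; rewrite -/t.
  move=> h1 h2 h3 h4 h5; rewrite -!exprMn ler_sqr ?nnegrE ?mulr_ge0 // ltW //.
set L := l2norm (restrict blk T x) in hQ *.
set WP := W x P in hQ *.
have L0 : 0 <= L by exact: l2norm_ge0.
have WP0 : 0 <= WP by exact: W_ge0.
have hQ2 : L ^+ 2 * s <= 4 * WP ^+ 2.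
  have h1 : L ^+ 2 * (s / 2) ^+ 2 <= L ^+ 2 * womega w P ^+ 2.
    apply: ler_wpM2l; first by rewrite sqr_ge0.
    by rewrite ler_sqr ?nnegrE ?womega_ge0 // divr_ge0 ?ltW.
  have h2 : womega w T * WP ^+ 2 <= s * WP ^+ 2 by apply: ler_wpM2r; rewrite ?sqr_ge0.
  have h3 : L ^+ 2 * (s / 2) ^+ 2 <= s * WP ^+ 2 by lra.
  have e : L ^+ 2 * (s / 2) ^+ 2 = (L ^+ 2 * s) * s / 4 by field.
  rewrite e in h3; nra.
have sq0 : 0 < Num.sqrt s by rewrite sqrtr_gt0.
have sqe : Num.sqrt s ^+ 2 = s by rewrite sqr_sqrtr // ltW.
set K := 2 / Num.sqrt s * WP.
have K0 : 0 <= K by rewrite /K mulr_ge0 // divr_ge0 // ltW.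
have Ke : K * Num.sqrt s = 2 * WP by rewrite /K; field; rewrite gt_eqF.
rewrite -ler_sqr ?nnegrE //.
have : (L * Num.sqrt s) ^+ 2 <= (K * Num.sqrt s) ^+ 2.
  by rewrite Ke !exprMn sqe; lra.
rewrite !exprMn sqe => H.
by rewrite -(ler_pM2r spos).
Qed.


Lemma subC_disj S T : T \subset ~: S -> [disjoint S & T].
Proof. by rewrite subsets_disjoint setCK disjoint_sym. Qed.

Lemma chain n : forall U P, (#|U| <= n)%N ->
  (forall b c, b \in P -> c \in U -> r c <= r b) ->
  (U != set0 -> s / 2 <= womega w P) ->
  exists Ts : seq {set 'I_B},
   [/\ forall T, T \in Ts -> T \subset U /\ womega w T <= s,
       restrict blk U x = \sum_(T <- Ts) restrict blk T x &
       \sum_(T <- Ts) l2norm (restrict blk T x) <= 2 / Num.sqrt s * (W x P + W x U)].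
Proof.
have base : forall U P, U = set0 -> exists Ts : seq {set 'I_B},
   [/\ forall T, T \in Ts -> T \subset U /\ womega w T <= s,
       restrict blk U x = \sum_(T <- Ts) restrict blk T x &
       \sum_(T <- Ts) l2norm (restrict blk T x) <= 2 / Num.sqrt s * (W x P + W x U)].
  move=> U P U0; exists [::]; split.
  - by move=> T; rewrite in_nil.
  - by rewrite big_nil U0 restrict_set0.
  - by rewrite big_nil mulr_ge0 ?addr_ge0 ?W_ge0 // divr_ge0 // sqrtr_ge0.
elim: n => [|n IH] U P hU hd hP.
  by apply: base; apply/eqP; rewrite -cards_eq0 -leqn0.
have [U0|Un0] := eqVneq U set0; first exact: base.
have [T [sTU hwT hTU hdT]] := top_group U.
have hP' := hP Un0.
have T0 : T != set0.
  apply/negP => /eqP T0; have : T != U by rewrite T0 eq_sym.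
  move/hTU; rewrite T0 /womega big_set0 leNgt divr_gt0 //.
have hc : (#|U :\: T| <= n)%N.
  rewrite cardsDS //; have := subset_leq_card sTU; rewrite -card_gt0 in T0.
  move: hU T0; set a := #|U|; set b := #|T|; lia.
have hne : U :\: T != set0 -> s / 2 <= womega w T.
  move=> ne; apply: hTU; apply/negP => /eqP e; move: ne; rewrite e setDv eqxx.
  by [].
have [Ts [h1 h2 h3]] := IH (U :\: T) T hc hdT hne.
exists (T :: Ts); split.
- move=> T'; rewrite in_cons => /orP [/eqP -> | hT'] //.
  have [a b] := h1 _ hT'; split => //; exact: subset_trans a (subsetDl _ _).
- by rewrite big_cons -h2; exact: restrict_split.
- rewrite big_cons (W_split x T U sTU).
  have sb := step_bound _ _ _ sTU hwT hd hP'.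
  move: h3 sb; set k := 2 / Num.sqrt s; rewrite !mulrDr => h3 sb; lra.
Qed.

Hypothesis d1 : delta < 1.

Lemma main_ineq S : womega w S <= s ->
  l2norm (restrict blk S x) <= (2 * Num.sqrt 2 * delta / (1 - delta)) / Num.sqrt s * W x (~: S)
     + Num.sqrt (1 + delta) / (1 - delta) * l2norm (A *m x).
Proof.
move=> hS.
have [T1 [sT1 hwT1 hT1 hdT1]] := top_group (~: S).
set U := ~: S :\: T1.
have hne : U != set0 -> s / 2 <= womega w T1.
  move=> ne; apply: hT1; apply/negP => /eqP e; move: ne; rewrite /U e setDv eqxx.
  by [].
have [Ts [h1 h2 h3]] := chain #|U| U T1 (leqnn _) hdT1 hne.
set u := restrict blk S x; set v := restrict blk T1 x; set z := u + v.
have disST1 : [disjoint S & T1] by exact: subC_disj.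
have UT1 : U \subset ~: T1 by rewrite /U setDE subsetIr.
have US : U \subset ~: S by rewrite /U subsetDl.
have hx : x = z + restrict blk U x.
  by rewrite {1}(restrict_compl S x) (restrict_split T1 (~: S) x sT1) /z addrA.
have hAx : A *m x = A *m z + \sum_(T <- Ts) A *m restrict blk T x.
  by rewrite {1}hx mulmxDr h2 mulmx_sumr.
have huv : dot u v = 0 := dot_disj (supp_restrict S x) (supp_restrict T1 x) disST1.
set a := l2norm u; set bb := l2norm v; set c := l2norm z; set e := l2norm (A *m x).
have hc2 : c ^+ 2 = a ^+ 2 + bb ^+ 2.
  by rewrite !sqr_l2norm /z dotDl !dotDr huv (dotC v u) huv addr0 add0r.
have hz : wnorm0 blk w z <= 2 * s.
  apply: le_trans (wnorm0_supp (supp_add (supp_restrict S x) (supp_restrict T1 x))) _.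
  by apply: le_trans (womegaU _ _) _; lra.
have [rz1 rz2] := RIP _ hz.
have a0 : 0 <= a := l2norm_ge0 _.
have b0 : 0 <= bb := l2norm_ge0 _.
have c0 : 0 <= c := l2norm_ge0 _.
have e0 : 0 <= e := l2norm_ge0 _.
have q10 : 0 <= Num.sqrt (1 + delta) := sqrtr_ge0 _.
have q20 : 0 <= Num.sqrt (2 : R) := sqrtr_ge0 _.
have hAz : l2norm (A *m z) <= Num.sqrt (1 + delta) * c.
  have q1 : Num.sqrt (1 + delta) ^+ 2 = 1 + delta by rewrite sqr_sqrtr // addr_ge0 ?ler01.
  rewrite -ler_sqr ?nnegrE ?mulr_ge0 ?l2norm_ge0 // exprMn q1; exact: rz2.
have e1 : dot (A *m z) (A *m z) = dot (A *m z) (A *m x)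
    - \sum_(T <- Ts) dot (A *m z) (A *m restrict blk T x).
  by rewrite hAx dotDr dot_sumr addrK.
have e2 : dot (A *m z) (A *m x) <= Num.sqrt (1 + delta) * c * e.
  exact: le_trans (cs _ _) (ler_wpM2r (l2norm_ge0 _) hAz).
have e3 : - \sum_(T <- Ts) dot (A *m z) (A *m restrict blk T x)
    <= delta * (a + bb) * \sum_(T <- Ts) l2norm (restrict blk T x).
  rewrite -sumrN mulr_sumr big_seq [X in _ <= X]big_seq; apply: ler_sum => T hT.
  have [sTU' hwT] := h1 T hT.
  have disST : [disjoint S & T] by apply: subC_disj; exact: subset_trans sTU' US.
  have disT1T : [disjoint T1 & T] by apply: subC_disj; exact: subset_trans sTU' UT1.
  have p1 := polar _ _ _ _ (supp_restrict S x) (supp_restrict T x) disST ltac:(lra).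
  have p2 := polar _ _ _ _ (supp_restrict T1 x) (supp_restrict T x) disT1T ltac:(lra).
  rewrite /z mulmxDr dotDl opprD.
  move: p1 p2; rewrite !ler_norml => /andP [p1 _] /andP [p2 _].
  move: p1 p2; rewrite -/a -/bb.
  set D1 := dot _ _; set D2 := dot _ _; set t := l2norm _ => p1 p2.
  lra.
set Sg := \sum_(T <- Ts) l2norm (restrict blk T x) in h3 e3.
have Sg0 : 0 <= Sg by apply: sumr_ge0 => T _; exact: l2norm_ge0.
have e4 : Sg <= 2 / Num.sqrt s * W x (~: S) by rewrite (W_split x T1 (~: S) sT1).
have e5 : a + bb <= Num.sqrt 2 * c.
  rewrite -ler_sqr ?nnegrE ?addr_ge0 ?mulr_ge0 // exprMn sqr_sqrtr // hc2.
  rewrite -subr_ge0.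
  have -> : 2 * (a ^+ 2 + bb ^+ 2) - (a + bb) ^+ 2 = (a - bb) ^+ 2 by ring.
  exact: sqr_ge0.
have ac : a <= c.
  by rewrite -ler_sqr ?nnegrE // hc2 lerDl sqr_ge0.
set K := 2 / Num.sqrt s * W x (~: S) in e4 *.
have K0 : 0 <= K by rewrite /K mulr_ge0 ?W_ge0 // divr_ge0 // sqrtr_ge0.
have f1 : delta * (a + bb) * Sg <= delta * (Num.sqrt 2 * c) * K.
  apply: ler_pM => //; first by rewrite mulr_ge0 // addr_ge0.
  exact: ler_wpM2l.
rewrite [l2norm (A *m z) ^+ 2]sqr_l2norm e1 in rz1.
have main : (1 - delta) * c ^+ 2 <= Num.sqrt (1 + delta) * c * e + delta * (Num.sqrt 2 * c) * K.
  apply: (le_trans rz1); apply: lerD e2 _; exact: le_trans e3 f1.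
have sq0 : 0 < Num.sqrt s by rewrite sqrtr_gt0.
have dp : 0 < 1 - delta by rewrite subr_gt0.
have eq : (2 * Num.sqrt 2 * delta / (1 - delta)) / Num.sqrt s * W x (~: S)
     + Num.sqrt (1 + delta) / (1 - delta) * e
     = (Num.sqrt (1 + delta) * e + delta * Num.sqrt 2 * K) / (1 - delta).
  by rewrite /K; field; rewrite ?gt_eqF.
rewrite eq ler_pdivlMr //.
have [c00|cp] := eqVneq c 0.
  have -> : a = 0 by apply/eqP; rewrite eq_le a0 andbT -c00.
  rewrite mul0r; apply: addr_ge0; first exact: mulr_ge0.
  exact: (mulr_ge0 (mulr_ge0 d0 q20) K0).
have cpos : 0 < c by rewrite lt_def cp c0.
have h : (1 - delta) * c <= Num.sqrt (1 + delta) * e + delta * Num.sqrt 2 * K.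
  rewrite -(ler_pM2r cpos).
  have -> : (Num.sqrt (1 + delta) * e + delta * Num.sqrt 2 * K) * c
     = Num.sqrt (1 + delta) * c * e + delta * (Num.sqrt 2 * c) * K by ring.
  have -> : (1 - delta) * c * c = (1 - delta) * c ^+ 2 by ring.
  exact: main.
apply: le_trans _ h; rewrite [a * _]mulrC ler_pM2l //.
Qed.

End Fixx.
End Block.

Theorem mainTheorem6 (R : rcfType) (m N B : nat) (A : 'M[R]_(m, N))
  (blk : 'I_N -> 'I_B) (w : 'I_B -> R) (s delta : R) :
  (forall b : 'I_B, exists i : 'I_N, blk i = b) ->
  (forall b : 'I_B, 1 <= w b) ->
  2 * winf w ^+ 2 <= s ->
  WBRIP blk w A (2 * s) delta ->
  delta < 1 / (2 * Num.sqrt 2 + 1) ->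
  BRNSP2 blk w A s (2 * Num.sqrt 2 * delta / (1 - delta))
                   (Num.sqrt (1 + delta) / (1 - delta)).
Proof.
move=> _ w1 hs [/andP [d0 d1] _ RIP] hd.
have dp : 0 < 1 - delta by rewrite subr_gt0.
have q2 : 0 < Num.sqrt (2 : R) by rewrite sqrtr_gt0 ltr0n.
have rho0 : 0 < 2 * Num.sqrt 2 * delta / (1 - delta).
  by rewrite divr_gt0 // !mulr_gt0 // ltr0n.
split.
- apply/andP; split => //.
  rewrite ltr_pdivrMr // mul1r.
  have hp : 0 < 2 * Num.sqrt (2 : R) + 1 by rewrite addr_gt0 // mulr_gt0 // ltr0n.
  move: hd; rewrite ltr_pdivlMr // => hd.
  move: hd; set q := Num.sqrt (2 : R) => hd; lra.
- by rewrite divr_gt0 // sqrtr_gt0 addr_gt0.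
move=> x S hS.
rewrite wnorm22_restrict wnorm21_restrict.
case: (pickP (@predT 'I_B)) => [b0 _|noB].
  have hw : forall c, w c <= winf w := fun c => le_bigmax _ _ c.
  have wi1 : 1 <= winf w := le_trans (w1 b0) (hw b0).
  have spos : 0 < s.
    apply: lt_le_trans hs; rewrite mulr_gt0 ?ltr0n // exprn_gt0 //.
    exact: lt_le_trans ltr01 wi1.
  have wsq : forall c, w c ^+ 2 <= s / 2.
    move=> c; rewrite ler_pdivlMr ?ltr0n // mulrC.
    apply: le_trans hs; rewrite ler_wpM2l ?ler0n //.
    rewrite ler_sqr ?nnegrE ?hw //.
      exact: le_trans ler01 (w1 c).
    exact: le_trans ler01 wi1.
  exact: (@main_ineq _ _ _ _ A blk w s delta w1 (ltW d0) RIP spos wsq x d1 S hS).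
have -> : l2norm (restrict blk S x) = 0.
  by rewrite l2normE dot_restrict big1 ?sqrtr0 // => b _; move: (noB b).
apply: addr_ge0.
- apply: mulr_ge0; first by rewrite divr_ge0 ?sqrtr_ge0 // ltW.
  by apply: W_ge0.
- apply: mulr_ge0; first by rewrite divr_ge0 ?sqrtr_ge0 // ltW.
  exact: l2norm_ge0.
Qed.
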